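(* For every integer $n>2$ there exists a cake-cutting instance with $n$ players and an envy-free partial connected division $y$ such that, for every envy-free complete connected division $x$ of that instance, there are $n-2$ players $i$ with $u_i(y,i)=2\,u_i(x,i)$ (with $u_i(x,i)>0$), and the remaining two players $i$ satisfy $u_i(y,i)\ge u_i(x,i)$.
   Context: A cake is the interval $[0,1]$. There are $n$ players; each player $i$ has a valuation $v_i$, a nonatomic probability measure on $[0,1]$. A (connected) division $x$ is a sequence $(X_1,\dots,X_n)$ of pairwise disjoint open intervals of $[0,1]$ (possibly empty), $X_i$ being the piece of player $i$; it is complete if the union of the closures of the $X_i$ equals $[0,1]$, and partial otherwise. Write $u_i(x,j)=v_i(X_j)$. $x$ is envy-free if $u_i(x,i)\ge u_i(x,j)$ for all $i,j$. *)

(* Defs.v *)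
From Stdlib Require Import Reals Lra List.
Open Scope R_scope.

(* A valuation (nonatomic probability measure on [0,1]) is represented by its
   cumulative distribution function F(t) = v([0,t]); nonatomic <-> F continuous.
   Then v((a,b)) = F b - F a. *)
Definition is_valuation (F : R -> R) : Prop :=
  continuity F /\
  (forall s t, s <= t -> F s <= F t) /\
  (forall t, t <= 0 -> F t = 0) /\
  (forall t, 1 <= t -> F t = 1).

Definition meas (F : R -> R) (I : R * R) : R := F (snd I) - F (fst I).

(* Open interval (a,b) with 0 <= a <= b <= 1 (empty iff a = b). *)
Definition good_interval (I : R * R) : Prop :=
  0 <= fst I /\ fst I <= snd I /\ snd I <= 1.

Definition in_open (I : R * R) (t : R) : Prop := fst I < t /\ t < snd I.

Definition is_division (n : nat) (X : nat -> R * R) : Prop :=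
  (forall i, (i < n)%nat -> good_interval (X i)) /\
  (forall i j, (i < n)%nat -> (j < n)%nat -> i <> j ->
     forall t, ~ (in_open (X i) t /\ in_open (X j) t)).

(* Closure of a nonempty open interval (a,b) is [a,b]; of an empty one, empty. *)
Definition in_closure (I : R * R) (t : R) : Prop :=
  fst I < snd I /\ fst I <= t /\ t <= snd I.

Definition is_complete (n : nat) (X : nat -> R * R) : Prop :=
  forall t, 0 <= t <= 1 -> exists i, (i < n)%nat /\ in_closure (X i) t.

Definition util (v : nat -> R -> R) (X : nat -> R * R) (i j : nat) : R :=
  meas (v i) (X j).

Definition envy_free (n : nat) (v : nat -> R -> R) (X : nat -> R * R) : Prop :=
  forall i j, (i < n)%nat -> (j < n)%nat -> util v X i i >= util v X i j.

(* Main.v *)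
Require Import Defs.
From Stdlib Require Import Reals Lra Lia List ZArith.
Open Scope R_scope.

Lemma lip_cont_pt (f : R -> R) (K : R) x0 :
  0 < K -> (forall x y, Rabs (f x - f y) <= K * Rabs (x - y)) -> continuity_pt f x0.
Proof.
  intros HK Hl. unfold continuity_pt, continue_in, limit1_in, limit_in.
  intros eps Heps. exists (eps / K). split.
  - apply Rdiv_lt_0_compat; lra.
  - intros x [_ Hx]. simpl in *. unfold Rdist in *.
    eapply Rle_lt_trans. apply Hl.
    replace eps with (K * (eps / K)) by (field; lra).
    apply Rmult_lt_compat_l; lra.
Qed.

Lemma Rmin_lip b x y : Rabs (Rmin b x - Rmin b y) <= Rabs (x - y).
Proof.
  unfold Rmin; destruct (Rle_dec b x); destruct (Rle_dec b y);
  unfold Rabs; repeat destruct Rcase_abs; lra.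
Qed.

Lemma Rmax_lip b x y : Rabs (Rmax b x - Rmax b y) <= Rabs (x - y).
Proof.
  unfold Rmax; destruct (Rle_dec b x); destruct (Rle_dec b y);
  unfold Rabs; repeat destruct Rcase_abs; lra.
Qed.

Definition clamp (u : R) : R := Rmin 1 (Rmax 0 u).
Definition lin (a b t : R) : R := clamp ((t - a) * / (b - a)).

Lemma clamp_lip x y : Rabs (clamp x - clamp y) <= Rabs (x - y).
Proof.
  unfold clamp. eapply Rle_trans. apply Rmin_lip. apply Rmax_lip.
Qed.

Lemma lin_lip a b x y : a < b -> Rabs (lin a b x - lin a b y) <= / (b - a) * Rabs (x - y).
Proof.
  intros H. unfold lin. eapply Rle_trans. apply clamp_lip.
  replace ((x - a) * / (b - a) - (y - a) * / (b - a)) with (/ (b - a) * (x - y)) by ring.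
  rewrite Rabs_mult. rewrite (Rabs_right (/ (b - a))). lra.
  apply Rle_ge, Rlt_le, Rinv_0_lt_compat; lra.
Qed.

Lemma lin_lo a b t : a < b -> t <= a -> lin a b t = 0.
Proof.
  intros H Ht. unfold lin, clamp.
  assert ((t - a) * / (b - a) <= 0).
  { assert (0 < / (b - a)) by (apply Rinv_0_lt_compat; lra).
    assert ((t - a) * / (b - a) <= 0 * / (b-a)) by (apply Rmult_le_compat_r; lra). lra. }
  rewrite Rmax_left by lra. rewrite Rmin_right; lra.
Qed.

Lemma lin_hi a b t : a < b -> b <= t -> lin a b t = 1.
Proof.
  intros H Ht. unfold lin, clamp.
  assert (1 <= (t - a) * / (b - a)).
  { assert (0 < / (b - a)) by (apply Rinv_0_lt_compat; lra).
    assert (Hq : (b - a) * / (b - a) <= (t - a) * / (b-a)) by (apply Rmult_le_compat_r; lra).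
    replace ((b - a) * / (b - a)) with 1 in Hq by (field; lra). lra. }
  rewrite Rmax_right by lra. rewrite Rmin_left; lra.
Qed.

Lemma lin_mid a b t : a < b -> a <= t <= b -> lin a b t = (t - a) / (b - a).
Proof.
  intros H [H1 H2]. unfold lin, clamp.
  assert (0 < / (b - a)) by (apply Rinv_0_lt_compat; lra).
  assert (0 <= (t - a) * / (b - a)).
  { assert (0 * / (b-a) <= (t - a) * / (b - a)) by (apply Rmult_le_compat_r; lra). lra. }
  assert ((t - a) * / (b - a) <= 1).
  { assert (Hq : (t - a) * / (b - a) <= (b - a) * / (b-a)) by (apply Rmult_le_compat_r; lra).
    replace ((b - a) * / (b - a)) with 1 in Hq by (field; lra). lra. }
  rewrite Rmax_right by lra. rewrite Rmin_right by lra. unfold Rdiv. reflexivity.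
Qed.

Lemma lin_mono a b s t : a < b -> s <= t -> lin a b s <= lin a b t.
Proof.
  intros H Hst. unfold lin, clamp.
  assert (0 < / (b - a)) by (apply Rinv_0_lt_compat; lra).
  assert ((s - a) * / (b - a) <= (t - a) * / (b - a)) by (apply Rmult_le_compat_r; lra).
  unfold Rmin, Rmax. repeat destruct Rle_dec; lra.
Qed.

Lemma lin_range a b t : 0 <= lin a b t <= 1.
Proof. unfold lin, clamp, Rmin, Rmax. repeat destruct Rle_dec; lra. Qed.

Lemma lin_cont a b : a < b -> continuity (lin a b).
Proof.
  intros H x. apply (lip_cont_pt _ (/ (b - a))).
  apply Rinv_0_lt_compat; lra. intros; apply lin_lip; auto.
Qed.


Lemma val_range F t : is_valuation F -> 0 <= F t <= 1.
Proof.
  intros [Hc [Hm [H0 H1]]]. split.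
  - rewrite <- (H0 (Rmin t 0)) by (apply Rmin_r). apply Hm, Rmin_l.
  - rewrite <- (H1 (Rmax t 1)) by (apply Rmax_r). apply Hm, Rmax_l.
Qed.

Definition disj (I J : R * R) : Prop := forall t, ~ (in_open I t /\ in_open J t).

Lemma disj_sym I J : disj I J -> disj J I.
Proof. intros H t [H1 H2]. apply (H t); auto. Qed.

Lemma disj_cases I J : good_interval J -> fst I < snd I -> disj I J ->
  snd J <= fst I \/ snd I <= fst J \/ fst J = snd J.
Proof.
  destruct I as [a b], J as [a' b']; simpl. intros [G1 [G2 G3]] Hab Hd.
  destruct (Rle_dec b' a); [left; auto|].
  destruct (Rle_dec b a'); [right; left; auto|].
  destruct (Req_dec a' b'); [right; right; auto|].
  assert (a' < b') by (destruct (Rle_lt_or_eq_dec _ _ G2); [auto|contradiction]).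
  exfalso. unfold disj, in_open in Hd; simpl in Hd.
  destruct (Rle_dec a a'); destruct (Rle_dec b b').
  - apply (Hd ((a' + b) / 2)); unfold in_open; simpl; lra.
  - apply (Hd ((a' + b') / 2)); unfold in_open; simpl; lra.
  - apply (Hd ((a + b) / 2)); unfold in_open; simpl; lra.
  - apply (Hd ((a + b') / 2)); unfold in_open; simpl; lra.
Qed.

Lemma two_disjoint F I J : is_valuation F -> good_interval I -> good_interval J -> disj I J ->
  meas F I + meas F J <= 1.
Proof.
  intros HF GI GJ Hd. pose proof HF as [Hc [Hm [H0 H1]]].
  unfold meas.
  destruct GI as [A1 [A2 A3]], GJ as [B1 [B2 B3]].
  destruct (Req_dec (fst I) (snd I)) as [E|E].
  { rewrite E. pose proof (val_range F (snd J) HF). pose proof (val_range F (fst J) HF).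
    assert (F (fst J) <= F (snd J)) by (apply Hm; lra). lra. }
  assert (Hlt : fst I < snd I) by lra.
  assert (GJ : good_interval J) by (repeat split; auto).
  destruct (disj_cases I J GJ Hlt Hd) as [C|[C|C]].
  - assert (F (snd J) <= F (fst I)) by (apply Hm; lra).
    pose proof (val_range F (snd I) HF). pose proof (val_range F (fst J) HF). lra.
  - assert (F (snd I) <= F (fst J)) by (apply Hm; lra).
    pose proof (val_range F (snd J) HF). pose proof (val_range F (fst I) HF). lra.
  - rewrite C. pose proof (val_range F (snd I) HF). pose proof (val_range F (fst I) HF).
    assert (F (fst I) <= F (snd I)) by (apply Hm; lra). lra.
Qed.

Fixpoint lsum (g : R * R -> R) (l : list (R * R)) : R :=
  match l with nil => 0 | K :: l' => g K + lsum g l' end.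

Lemma lsum_app g l1 l2 : lsum g (l1 ++ l2) = lsum g l1 + lsum g l2.
Proof. induction l1; simpl; lra. Qed.

Lemma lsum_ext g h l : (forall I, In I l -> g I = h I) -> lsum g l = lsum h l.
Proof. induction l; simpl; intros H; auto. rewrite H, IHl; auto. Qed.

Lemma lsum_le g l M : (forall I, In I l -> g I <= M) -> lsum g l <= INR (length l) * M.
Proof.
  induction l; cbn [lsum length]; intros H. simpl; lra.
  rewrite S_INR. assert (g a <= M) by (apply H; left; auto).
  assert (lsum g l <= INR (length l) * M) by (apply IHl; intros; apply H; right; auto). lra.
Qed.

Lemma lsum_lt g l M : (forall I, In I l -> g I <= M) -> (exists I, In I l /\ g I < M) ->
  lsum g l < INR (length l) * M.
Proof.
  induction l; cbn [lsum length In]; intros H [I0 [Hi Hl]]. destruct Hi.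
  rewrite S_INR. destruct Hi as [E|Hi].
  - subst. assert (lsum g l <= INR (length l) * M) by (apply lsum_le; intros; apply H; right; auto). lra.
  - assert (g a <= M) by (apply H; left; auto).
    assert (lsum g l < INR (length l) * M) by (apply IHl; [intros; apply H; right; auto|eauto]). lra.
Qed.

Lemma lsum_mult g l w : (forall I, In I l -> g I = 0 \/ g I = w) -> exists m, lsum g l = INR m * w.
Proof.
  induction l; simpl; intros H. exists 0%nat. simpl; lra.
  destruct IHl as [m Hm]. intros; apply H; right; auto. destruct (H a) as [E|E]. left; auto.
  - exists m. lra.
  - exists (S m). rewrite S_INR. lra.
Qed.

Fixpoint PD (l : list (R * R)) : Prop :=
  match l with nil => True | K :: l' => (forall J, In J l' -> disj K J) /\ PD l' end.

Lemma PD_split l1 I l2 : PD (l1 ++ I :: l2) ->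
  (forall J, In J (l1 ++ l2) -> disj I J) /\ PD (l1 ++ l2).
Proof.
  induction l1 as [|J0 l1 IH]; simpl.
  - tauto.
  - intros [H1 H2]. destruct (IH H2) as [A B]. split.
    + intros J [E|HJ].
      * subst. apply disj_sym, H1. apply in_or_app; right; left; auto.
      * auto.
    + split; auto. intros J HJ. apply H1. apply in_app_or in HJ. apply in_or_app.
      destruct HJ; auto. right; right; auto.
Qed.

Definition T (F : R -> R) (c : R) (I : R * R) : R := F (Rmin (snd I) c) - F (Rmin (fst I) c).

Lemma T_cont F I x : continuity F -> continuity_pt (fun c => T F c I) x.
Proof.
  intros HF. unfold T.
  apply (continuity_pt_minus (fun c => F (Rmin (snd I) c)) (fun c => F (Rmin (fst I) c))).
  - apply (continuity_pt_comp (fun c => Rmin (snd I) c) F).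
    apply (lip_cont_pt _ 1). lra. intros; rewrite Rmult_1_l; apply Rmin_lip. apply HF.
  - apply (continuity_pt_comp (fun c => Rmin (fst I) c) F).
    apply (lip_cont_pt _ 1). lra. intros; rewrite Rmult_1_l; apply Rmin_lip. apply HF.
Qed.

Lemma lsum_T_cont F l x : continuity F -> continuity_pt (fun c => lsum (T F c) l) x.
Proof.
  intros HF. induction l; simpl.
  - apply continuity_pt_const. intros a b; auto.
  - apply (continuity_pt_plus (fun c => T F c a) (fun c => lsum (T F c) l)); auto.
    apply T_cont; auto.
Qed.

Lemma left_limit (h : R -> R) a : 0 < a -> continuity_pt h a ->
  (forall c, 0 <= c < a -> h c = 0) -> h a = 0.
Proof.
  intros Ha Hc Hz. destruct (Req_dec (h a) 0) as [E|E]; auto. exfalso.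
  assert (Hp : Rabs (h a) > 0) by (apply Rabs_pos_lt; auto).
  destruct (Hc (Rabs (h a)) Hp) as [alp [Halp Hx]].
  set (x := a - Rmin alp a / 2).
  assert (0 < Rmin alp a) by (apply Rmin_pos; lra).
  assert (Rmin alp a <= alp) by apply Rmin_l. assert (Rmin alp a <= a) by apply Rmin_r.
  specialize (Hx x). simpl in Hx. unfold Rdist in Hx.
  rewrite (Hz x) in Hx by (unfold x; lra).
  assert (Rabs (0 - h a) < Rabs (h a)).
  { apply Hx. split. split; [exact I|unfold x; lra].
    unfold x. replace (a - Rmin alp a / 2 - a) with (- (Rmin alp a / 2)) by ring.
    rewrite Rabs_Ropp, Rabs_right; lra. }
  rewrite Rabs_minus_sym, Rminus_0_r in H2. lra.
Qed.

Lemma T_zero F I : is_valuation F -> good_interval I -> T F 0 I = 0.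
Proof.
  intros HF [G1 [G2 G3]]. unfold T. rewrite !Rmin_right by lra. ring.
Qed.

Lemma T_shift F I J a c : good_interval J -> fst I <= a -> a <= c -> c <= snd I ->
  (snd J <= fst I \/ snd I <= fst J \/ fst J = snd J) -> T F c J = T F a J.
Proof.
  intros [G1 [G2 G3]] H1 H2 H3 [C|[C|C]]; unfold T.
  - rewrite !Rmin_left by lra. reflexivity.
  - rewrite !Rmin_right by lra. ring.
  - rewrite C. ring.
Qed.

Lemma L2 F (HF : is_valuation F) : forall k (l : list (R * R)), (length l <= k)%nat ->
  (forall I, In I l -> good_interval I) -> PD l -> forall c, 0 <= c ->
  (forall t, 0 <= t <= c -> exists I, In I l /\ in_closure I t) ->
  lsum (T F c) l = F c.
Proof.
  pose proof HF as [Hc [Hm [H0 H1]]].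
  induction k as [|k IH]; intros l Hlen Hg Hpd c Hc0 Hcov.
  - destruct (Hcov 0) as [I [HI _]]. lra. destruct l; simpl in *; [destruct HI|lia].
  - destruct (Hcov c) as [I [HI [Ha [Hac Hcb]]]]. lra.
    destruct (in_split I l HI) as [l1 [l2 E]]. subst l.
    rewrite lsum_app. cbn [lsum].
    destruct (PD_split _ _ _ Hpd) as [Hd Hpd'].
    assert (Hgr : forall J, In J (l1 ++ l2) -> good_interval J).
    { intros J HJ. apply Hg. apply in_app_or in HJ; apply in_or_app. destruct HJ; auto. right; right; auto. }
    assert (HTI : T F c I = F c - F (fst I)).
    { unfold T. rewrite Rmin_right by lra. rewrite Rmin_left by lra. reflexivity. }
    assert (Hsh : lsum (T F c) (l1 ++ l2) = lsum (T F (fst I)) (l1 ++ l2)).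
    { apply lsum_ext. intros J HJ. apply (T_shift F I J); auto; try lra.
      apply disj_cases; auto. }
    rewrite lsum_app in Hsh.
    assert (Hrest : lsum (T F (fst I)) (l1 ++ l2) = F (fst I)).
    { destruct (Hg I) as [GI _]. apply in_or_app; right; left; auto.
      destruct (Req_dec (fst I) 0) as [Z|Z].
      - rewrite Z, H0 by lra. rewrite (lsum_ext _ (fun _ => 0)).
        + clear. induction (l1 ++ l2); simpl; lra.
        + intros J HJ. apply T_zero; auto.
      - set (h := fun c => lsum (T F c) (l1 ++ l2) - F c).
        assert (Hh : h (fst I) = 0).
        { apply left_limit. lra.
          - unfold h. apply (continuity_pt_minus (fun c => lsum (T F c) (l1 ++ l2)) F).
            apply lsum_T_cont; auto. apply Hc.
          - intros c' Hc'. unfold h. rewrite (IH (l1 ++ l2)); try lra; auto.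
            + rewrite length_app in *; simpl in Hlen; lia.
            + intros t Ht. destruct (Hcov t) as [J [HJ Hcl]]. lra.
              apply in_app_or in HJ. destruct HJ as [HJ|[HJ|HJ]].
              * exists J; split; auto; apply in_or_app; auto.
              * subst J. destruct Hcl as [_ [Hx _]]. lra.
              * exists J; split; auto; apply in_or_app; auto. }
        unfold h in Hh. lra. }
    rewrite lsum_app in Hrest. rewrite lsum_app in Hsh. lra.
Qed.


Definition w (n : nat) : R := / INR n.
Definition dd (n : nat) : R := w n / 8.
Definition Aa (n : nat) : R := 1 - 2 * w n.
Definition Bb (n : nat) : R := 1 - w n.
Definition cc (n k : nat) : R := INR (S k) * w n.
Definition vS (n k : nat) : R -> R := lin (cc n k - dd n) (cc n k + dd n).
Definition Fb : R -> R := lin 0 1.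
Definition Fa (n : nat) (t : R) : R :=
  Aa n * lin 0 (Aa n) t + w n * lin (Aa n + dd n) (Bb n) t + w n * lin (Bb n) 1 t.
Definition vv (n : nat) (i : nat) : R -> R :=
  if Nat.ltb i (n - 2) then vS n i else if Nat.eqb i (n - 2) then Fa n else Fb.
Definition yy (n : nat) (i : nat) : R * R :=
  if Nat.ltb i (n - 2) then (cc n i - dd n, cc n i + dd n)
  else if Nat.eqb i (n - 2) then (Aa n + dd n, Bb n) else (Bb n, 1).

Lemma wfacts n : (3 <= n)%nat -> 0 < w n /\ w n <= /3 /\ INR n * w n = 1.
Proof.
  intros H. assert (3 <= INR n) by (replace 3 with (INR 3) by (simpl; ring); apply le_INR; auto).
  unfold w. split; [apply Rinv_0_lt_compat; lra|]. split.
  - apply Rinv_le_contravar; lra.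
  - field; lra.
Qed.

Lemma INR_w_lt n a b : (3 <= n)%nat -> INR a * w n < INR b * w n -> (a < b)%nat.
Proof.
  intros H Hab. destruct (wfacts n H) as [Hw _]. apply INR_lt.
  apply Rmult_lt_reg_r with (w n); auto.
Qed.

Lemma cc_bounds n k : (3 <= n)%nat -> (k < n - 2)%nat -> w n <= cc n k <= Aa n.
Proof.
  intros H Hk. destruct (wfacts n H) as [Hw [Hw3 HN]]. unfold cc, Aa.
  assert (1 <= INR (S k)) by (replace 1 with (INR 1) by (simpl; ring); apply le_INR; lia).
  assert (INR (S k) <= INR n - 2).
  { replace 2 with (INR 2) by (simpl; ring). rewrite <- minus_INR by lia. apply le_INR; lia. }
  split; nra.
Qed.

Lemma lin_val a b : 0 <= a -> a < b -> b <= 1 -> is_valuation (lin a b).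
Proof.
  intros H0 H1 H2. split; [apply lin_cont; auto|]. split; [intros; apply lin_mono; auto|].
  split; intros; [apply lin_lo|apply lin_hi]; auto; lra.
Qed.

Lemma dd_facts n : (3 <= n)%nat -> 0 < dd n /\ dd n = w n / 8.
Proof. intros H. destruct (wfacts n H) as [Hw _]. unfold dd. split; lra. Qed.

Lemma vS_val n k : (3 <= n)%nat -> (k < n - 2)%nat -> is_valuation (vS n k).
Proof.
  intros H Hk. destruct (wfacts n H) as [Hw [Hw3 HN]]. pose proof (cc_bounds n k H Hk).
  unfold vS, dd, Aa in *. apply lin_val; lra.
Qed.

Lemma Fb_val : is_valuation Fb.
Proof. unfold Fb. apply lin_val; lra. Qed.

Lemma Fa_val n : (3 <= n)%nat -> is_valuation (Fa n).
Proof.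
  intros H. destruct (wfacts n H) as [Hw [Hw3 HN]].
  assert (HA : 0 < Aa n) by (unfold Aa; lra).
  assert (HAB : Aa n + dd n < Bb n) by (unfold Aa, Bb, dd; lra).
  assert (HB : Bb n < 1) by (unfold Bb; lra).
  split; [|split; [|split]].
  - intros x. unfold Fa.
    apply (continuity_pt_plus (fun t => Aa n * lin 0 (Aa n) t + w n * lin (Aa n + dd n) (Bb n) t)
                              (fun t => w n * lin (Bb n) 1 t)).
    + apply (continuity_pt_plus (fun t => Aa n * lin 0 (Aa n) t) (fun t => w n * lin (Aa n + dd n) (Bb n) t)).
      * apply (continuity_pt_scal (lin 0 (Aa n))). apply lin_cont; auto.
      * apply (continuity_pt_scal (lin (Aa n + dd n) (Bb n))). apply lin_cont; auto.
    + apply (continuity_pt_scal (lin (Bb n) 1)). apply lin_cont; auto.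
  - intros s t Hst. unfold Fa.
    pose proof (lin_mono 0 (Aa n) s t HA Hst).
    pose proof (lin_mono _ _ s t HAB Hst). pose proof (lin_mono _ _ s t HB Hst). nra.
  - intros t Ht. unfold Fa. pose proof (dd_facts n H) as [Hd _].
    rewrite (lin_lo 0 (Aa n) t), (lin_lo (Aa n + dd n) (Bb n) t), (lin_lo (Bb n) 1 t); lra.
  - intros t Ht. unfold Fa.
    rewrite (lin_hi 0 (Aa n) t), (lin_hi (Aa n + dd n) (Bb n) t), (lin_hi (Bb n) 1 t); try lra.
    all: unfold Aa, Bb; try lra.
Qed.


Lemma lin_gt_mid a b t : a < b -> (a + b) / 2 < t -> 1 / 2 < lin a b t.
Proof.
  intros H Ht. destruct (Rle_dec b t).
  - rewrite lin_hi; auto; lra.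
  - rewrite lin_mid by lra. unfold Rdiv.
    assert (0 < / (b - a)) by (apply Rinv_0_lt_compat; lra).
    assert ((b - a) / 2 * / (b - a) < (t - a) * / (b - a)) by (apply Rmult_lt_compat_r; lra).
    replace ((b - a) / 2 * / (b - a)) with (1 * / 2) in H1 by (field; lra). lra.
Qed.

Lemma lin_lt_mid a b t : a < b -> t < (a + b) / 2 -> lin a b t < 1 / 2.
Proof.
  intros H Ht. destruct (Rle_dec t a).
  - rewrite lin_lo; auto; lra.
  - rewrite lin_mid by lra. unfold Rdiv.
    assert (0 < / (b - a)) by (apply Rinv_0_lt_compat; lra).
    assert ((t - a) * / (b - a) < (b - a) / 2 * / (b - a)) by (apply Rmult_lt_compat_r; lra).
    replace ((b - a) / 2 * / (b - a)) with (1 * / 2) in H1 by (field; lra). lra.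
Qed.

Lemma lin_at_mid a b : a < b -> lin a b ((a + b) / 2) = 1 / 2.
Proof. intros H. rewrite lin_mid by lra. field; intro; lra. Qed.


Lemma Fa_r1 n t : (3 <= n)%nat -> 0 <= t <= Aa n -> Fa n t = t.
Proof.
  intros H Ht. destruct (wfacts n H) as [Hw [Hw3 HN]]. pose proof (dd_facts n H) as [Hd Hd'].
  assert (HA : 0 < Aa n) by (unfold Aa; lra).
  unfold Fa. rewrite (lin_mid 0 (Aa n) t), (lin_lo (Aa n + dd n) (Bb n) t), (lin_lo (Bb n) 1 t); try lra.
  field; intro; lra. all: unfold Aa, Bb in *; lra.
Qed.

Lemma Fa_r2 n t : (3 <= n)%nat -> Aa n <= t <= Aa n + dd n -> Fa n t = Aa n.
Proof.
  intros H Ht. destruct (wfacts n H) as [Hw [Hw3 HN]]. pose proof (dd_facts n H) as [Hd Hd'].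
  assert (HA : 0 < Aa n) by (unfold Aa; lra).
  unfold Fa. rewrite (lin_hi 0 (Aa n) t), (lin_lo (Aa n + dd n) (Bb n) t), (lin_lo (Bb n) 1 t); try lra.
  all: unfold Aa, Bb in *; lra.
Qed.

Lemma Fa_r4 n t : (3 <= n)%nat -> Bb n <= t <= 1 -> Fa n t = t.
Proof.
  intros H Ht. destruct (wfacts n H) as [Hw [Hw3 HN]]. pose proof (dd_facts n H) as [Hd Hd'].
  assert (HA : 0 < Aa n) by (unfold Aa; lra).
  unfold Fa. rewrite (lin_hi 0 (Aa n) t), (lin_hi (Aa n + dd n) (Bb n) t), (lin_mid (Bb n) 1 t); try lra.
  unfold Aa, Bb in *. field. intro; lra. all: unfold Aa, Bb in *; lra.
Qed.

Lemma Fa_le n t : (3 <= n)%nat -> 0 <= t <= 1 -> Fa n t <= t.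
Proof.
  intros H Ht. destruct (wfacts n H) as [Hw [Hw3 HN]]. pose proof (dd_facts n H) as [Hd Hd'].
  assert (HA : 0 < Aa n) by (unfold Aa; lra).
  destruct (Rle_dec t (Aa n)). rewrite Fa_r1; auto; lra.
  destruct (Rle_dec t (Aa n + dd n)). rewrite Fa_r2; auto; lra.
  destruct (Rle_dec (Bb n) t). rewrite Fa_r4; auto; lra.
  assert (HAB : Aa n + dd n < Bb n) by (unfold Aa, Bb; lra).
  unfold Fa. rewrite (lin_hi 0 (Aa n) t), (lin_lo (Bb n) 1 t); try lra.
  pose proof (lin_range (Aa n + dd n) (Bb n) t) as [L0 L1].
  assert (Hu : lin (Aa n + dd n) (Bb n) t * (Bb n - (Aa n + dd n)) = t - (Aa n + dd n)).
  { rewrite lin_mid by lra. field. unfold Aa, Bb; intro; lra. }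
  set (u := lin (Aa n + dd n) (Bb n) t) in *.
  assert (HB : Bb n = Aa n + w n) by (unfold Aa, Bb; ring).
  rewrite HB in Hu.
  assert (dd n * u <= dd n) by nra.
  assert (E : w n * u = t - Aa n - dd n + dd n * u).
  { replace (w n * u) with (u * (Aa n + w n - (Aa n + dd n)) + dd n * u) by ring. rewrite Hu. ring. }
  lra. all: unfold Bb; lra.
Qed.

Lemma Fa_mult n m : (3 <= n)%nat -> (m <= n)%nat -> Fa n (INR m * w n) = INR m * w n.
Proof.
  intros H Hm. destruct (wfacts n H) as [Hw [Hw3 HN]].
  assert (0 <= INR m) by apply pos_INR.
  assert (INR m <= INR n) by (apply le_INR; auto).
  destruct (le_lt_dec m (n - 2)).
  - apply Fa_r1; auto. split. nra.
    assert (INR m <= INR n - 2).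
    { replace 2 with (INR 2) by (simpl; ring). rewrite <- minus_INR by lia. apply le_INR; lia. }
    unfold Aa. nra.
  - apply Fa_r4; auto. split; [|nra].
    assert (INR n - 1 <= INR m).
    { replace 1 with (INR 1) by (simpl; ring). rewrite <- minus_INR by lia. apply le_INR; lia. }
    unfold Bb. nra.
Qed.

Lemma cc_mid n k : (cc n k - dd n + (cc n k + dd n)) / 2 = cc n k.
Proof. field. Qed.

Lemma vS_lo n k t : (3 <= n)%nat -> t <= cc n k - dd n -> vS n k t = 0.
Proof. intros H Ht. pose proof (dd_facts n H) as [Hd _]. apply lin_lo; lra. Qed.
Lemma vS_hi n k t : (3 <= n)%nat -> cc n k + dd n <= t -> vS n k t = 1.
Proof. intros H Ht. pose proof (dd_facts n H) as [Hd _]. apply lin_hi; lra. Qed.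
Lemma vS_c n k : (3 <= n)%nat -> vS n k (cc n k) = 1 / 2.
Proof. intros H. pose proof (dd_facts n H) as [Hd _]. unfold vS. rewrite <- (cc_mid n k) at 3. apply lin_at_mid; lra. Qed.
Lemma vS_gt n k t : (3 <= n)%nat -> cc n k < t -> 1 / 2 < vS n k t.
Proof. intros H Ht. pose proof (dd_facts n H) as [Hd _]. apply lin_gt_mid; [lra|]. rewrite cc_mid; auto. Qed.
Lemma vS_lt n k t : (3 <= n)%nat -> t < cc n k -> vS n k t < 1 / 2.
Proof. intros H Ht. pose proof (dd_facts n H) as [Hd _]. apply lin_lt_mid; [lra|]. rewrite cc_mid; auto. Qed.
Lemma vS_range n k t : 0 <= vS n k t <= 1.
Proof. apply lin_range. Qed.
Lemma vS_mono n k s t : (3 <= n)%nat -> s <= t -> vS n k s <= vS n k t.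
Proof. intros H Ht. pose proof (dd_facts n H) as [Hd _]. apply lin_mono; auto; lra. Qed.


Lemma vv_S n i : (i < n - 2)%nat -> vv n i = vS n i.
Proof. intros H. unfold vv. rewrite (proj2 (Nat.ltb_lt _ _) H). auto. Qed.
Lemma vv_a n : vv n (n - 2) = Fa n.
Proof. unfold vv. rewrite Nat.ltb_irrefl, Nat.eqb_refl. auto. Qed.
Lemma vv_b n : (3 <= n)%nat -> vv n (n - 1) = Fb.
Proof.
  intros H. unfold vv. rewrite (proj2 (Nat.ltb_ge _ _)) by lia.
  rewrite (proj2 (Nat.eqb_neq _ _)) by lia. auto.
Qed.
Lemma yy_S n i : (i < n - 2)%nat -> yy n i = (cc n i - dd n, cc n i + dd n).
Proof. intros H. unfold yy. rewrite (proj2 (Nat.ltb_lt _ _) H). auto. Qed.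
Lemma yy_a n : yy n (n - 2) = (Aa n + dd n, Bb n).
Proof. unfold yy. rewrite Nat.ltb_irrefl, Nat.eqb_refl. auto. Qed.
Lemma yy_b n : (3 <= n)%nat -> yy n (n - 1) = (Bb n, 1).
Proof.
  intros H. unfold yy. rewrite (proj2 (Nat.ltb_ge _ _)) by lia.
  rewrite (proj2 (Nat.eqb_neq _ _)) by lia. auto.
Qed.

Lemma idx_cases n i : (3 <= n)%nat -> (i < n)%nat -> (i < n - 2)%nat \/ i = (n - 2)%nat \/ i = (n - 1)%nat.
Proof. lia. Qed.

Lemma Fb_id t : 0 <= t <= 1 -> Fb t = t.
Proof. intros H. unfold Fb. rewrite lin_mid by lra. field. Qed.

Lemma vv_val n i : (3 <= n)%nat -> (i < n)%nat -> is_valuation (vv n i).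
Proof.
  intros H Hi. destruct (idx_cases n i H Hi) as [E|[E|E]].
  - rewrite vv_S by auto. apply vS_val; auto.
  - subst. rewrite vv_a. apply Fa_val; auto.
  - subst. rewrite vv_b by auto. apply Fb_val.
Qed.

Lemma cc_diff n i j : (3 <= n)%nat -> i <> j -> w n <= Rabs (cc n i - cc n j).
Proof.
  intros H Hij. destruct (wfacts n H) as [Hw _]. unfold cc.
  replace (INR (S i) * w n - INR (S j) * w n) with ((INR (S i) - INR (S j)) * w n) by ring.
  rewrite Rabs_mult, (Rabs_right (w n)) by lra.
  assert (1 <= Rabs (INR (S i) - INR (S j))).
  { destruct (Nat.lt_total i j) as [L|[L|L]]; [|lia|].
    - assert (INR (S i) + 1 <= INR (S j)) by (rewrite <- S_INR; apply le_INR; lia).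
      rewrite Rabs_left1 by lra. lra.
    - assert (INR (S j) + 1 <= INR (S i)) by (rewrite <- S_INR; apply le_INR; lia).
      rewrite Rabs_right by lra. lra. }
  nra.
Qed.

Lemma yy_div n : (3 <= n)%nat -> is_division n (yy n).
Proof.
  intros H. destruct (wfacts n H) as [Hw [Hw3 HN]]. pose proof (dd_facts n H) as [Hd Hd'].
  split.
  - intros i Hi. destruct (idx_cases n i H Hi) as [E|[E|E]].
    + rewrite yy_S by auto. pose proof (cc_bounds n i H E). unfold good_interval, Aa in *; simpl; lra.
    + subst. rewrite yy_a. unfold good_interval, Aa, Bb; simpl; lra.
    + subst. rewrite yy_b by auto. unfold good_interval, Bb; simpl; lra.
  - intros i j Hi Hj Hij t [Ht1 Ht2].
    destruct (idx_cases n i H Hi) as [Ei|[Ei|Ei]]; destruct (idx_cases n j H Hj) as [Ej|[Ej|Ej]];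
      try (subst; lia);
      repeat match goal with
      | [ E : (?k < n - 2)%nat, Hx : in_open (yy n ?k) t |- _ ] => rewrite (yy_S n k E) in Hx
      | [ E : ?k = (n - 2)%nat, Hx : in_open (yy n ?k) t |- _ ] => rewrite E, yy_a in Hx
      | [ E : ?k = (n - 1)%nat, Hx : in_open (yy n ?k) t |- _ ] => rewrite E, (yy_b n H) in Hx
      end; unfold in_open in *; simpl in *.
    + pose proof (cc_diff n i j H Hij). unfold Rabs in H0; destruct Rcase_abs; lra.
    + pose proof (cc_bounds n i H Ei). lra.
    + pose proof (cc_bounds n i H Ei). unfold Aa, Bb in *; lra.
    + pose proof (cc_bounds n j H Ej). lra.
    + unfold Aa, Bb in *; lra.
    + pose proof (cc_bounds n j H Ej). unfold Aa, Bb in *; lra.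
    + unfold Aa, Bb in *; lra.
Qed.

Lemma yy_notcomplete n : (3 <= n)%nat -> ~ is_complete n (yy n).
Proof.
  intros H Hc. destruct (wfacts n H) as [Hw [Hw3 HN]]. pose proof (dd_facts n H) as [Hd Hd'].
  destruct (Hc 0) as [i [Hi [_ [Hf _]]]]. lra.
  destruct (idx_cases n i H Hi) as [E|[E|E]].
  - rewrite yy_S in Hf by auto. pose proof (cc_bounds n i H E). simpl in Hf. lra.
  - subst. rewrite yy_a in Hf. simpl in Hf. unfold Aa in *; lra.
  - subst. rewrite yy_b in Hf by auto. simpl in Hf. unfold Bb in *; lra.
Qed.

Lemma yy_ef n : (3 <= n)%nat -> envy_free n (vv n) (yy n).
Proof.
  intros H i j Hi Hj. destruct (wfacts n H) as [Hw [Hw3 HN]]. pose proof (dd_facts n H) as [Hd Hd'].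
  unfold util, meas.
  destruct (idx_cases n i H Hi) as [Ei|[Ei|Ei]].
  - rewrite vv_S by auto. rewrite yy_S by auto. simpl.
    rewrite vS_hi, vS_lo; auto; try lra.
    pose proof (vS_range n i (snd (yy n j))). pose proof (vS_range n i (fst (yy n j))). lra.
  - subst i. rewrite vv_a, yy_a. simpl.
    rewrite Fa_r4 by (auto; unfold Bb; lra). rewrite Fa_r2 by (auto; lra).
    destruct (idx_cases n j H Hj) as [Ej|[Ej|Ej]].
    + rewrite yy_S by auto. simpl. pose proof (cc_bounds n j H Ej).
      rewrite (Fa_r1 n (cc n j - dd n)) by (auto; lra).
      pose proof (Fa_le n (cc n j + dd n) H). unfold Aa, Bb in *. assert (Fa n (cc n j + dd n) <= cc n j + dd n) by (apply H1; lra). lra.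
    + subst. rewrite yy_a. simpl. rewrite Fa_r4 by (auto; unfold Bb; lra). rewrite Fa_r2 by (auto; lra). lra.
    + subst. rewrite yy_b by auto. simpl. rewrite !Fa_r4 by (auto; unfold Bb; lra). unfold Aa, Bb; lra.
  - subst i. rewrite vv_b, yy_b by auto. simpl. rewrite !Fb_id by (unfold Bb; lra).
    destruct (idx_cases n j H Hj) as [Ej|[Ej|Ej]].
    + rewrite yy_S by auto. simpl. pose proof (cc_bounds n j H Ej).
      rewrite !Fb_id by (unfold Aa in *; lra). unfold Bb; lra.
    + subst. rewrite yy_a. simpl. rewrite !Fb_id by (unfold Aa, Bb; lra). unfold Aa, Bb; lra.
    + subst. rewrite yy_b by auto. simpl. rewrite !Fb_id by (unfold Bb; lra). lra.
Qed.


Lemma nat_above r : 0 <= r -> exists m : nat, r < INR m <= r + 1.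
Proof.
  intros Hr. destruct (archimed r) as [A B].
  assert (Hz : (0 <= up r)%Z) by (apply le_IZR; lra).
  exists (Z.to_nat (up r)). rewrite INR_IZR_INZ, Z2Nat.id by auto. lra.
Qed.

Lemma in_map_seq (x : nat -> R * R) n J : In J (map x (seq 0 n)) -> exists i, (i < n)%nat /\ J = x i.
Proof. intros H. apply in_map_iff in H. destruct H as [i [E Hi]]. apply in_seq in Hi. exists i; split; auto; lia. Qed.

Lemma in_map_seq' (x : nat -> R * R) n i : (i < n)%nat -> In (x i) (map x (seq 0 n)).
Proof. intros H. apply in_map. apply in_seq. lia. Qed.

Lemma PD_map n x : is_division n x -> forall k s, (s + k <= n)%nat -> PD (map x (seq s k)).
Proof.
  intros [_ Hd]. induction k; intros s Hs; simpl; auto. split.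
  - intros J HJ. apply in_map_iff in HJ. destruct HJ as [j [E Hj]]. apply in_seq in Hj. subst.
    intros t. apply (Hd s j); lia.
  - apply IHk. lia.
Qed.


Lemma sum1 n x F : is_valuation F -> is_division n x -> is_complete n x ->
  lsum (meas F) (map x (seq 0 n)) = 1.
Proof.
  intros HF Hdiv Hc. pose proof HF as [_ [_ [_ H1]]].
  assert (Hg : forall J, In J (map x (seq 0 n)) -> good_interval J).
  { intros J HJ. destruct (in_map_seq x n J HJ) as [i [Hi E]]. subst. apply (proj1 Hdiv); auto. }
  assert (Hpd : PD (map x (seq 0 n))) by (apply (PD_map n x Hdiv n 0); lia).
  assert (Hcov : forall t, 0 <= t <= 1 -> exists I, In I (map x (seq 0 n)) /\ in_closure I t).
  { intros t Ht. destruct (Hc t Ht) as [i [Hi Hcl]]. exists (x i). split; auto. apply in_map_seq'; auto. }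
  assert (E := L2 F HF n (map x (seq 0 n)) ltac:(rewrite length_map, length_seq; auto) Hg Hpd 1 ltac:(lra) Hcov).
  rewrite H1 in E by lra. rewrite <- E.
  apply lsum_ext. intros J HJ. destruct (Hg J HJ) as [G1 [G2 G3]]. unfold T, meas.
  rewrite !Rmin_left by lra. auto.
Qed.

Lemma meas_mono_range F I : is_valuation F -> good_interval I -> 0 <= meas F I <= 1.
Proof.
  intros HF [G1 [G2 G3]]. pose proof HF as [_ [Hm _]]. unfold meas.
  pose proof (val_range F (snd I) HF). pose proof (val_range F (fst I) HF).
  assert (F (fst I) <= F (snd I)) by (apply Hm; auto). lra.
Qed.

Lemma half_bound n x k j : (3 <= n)%nat -> is_division n x -> envy_free n (vv n) x ->
  (k < n - 2)%nat -> (j < n)%nat -> j <> k -> meas (vS n k) (x j) <= 1 / 2.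
Proof.
  intros H Hdiv Hef Hk Hj Hjk.
  pose proof (Hef k j ltac:(lia) Hj) as E. unfold util in E. rewrite vv_S in E by auto.
  pose proof (two_disjoint (vS n k) (x k) (x j) (vS_val n k H Hk) (proj1 Hdiv k ltac:(lia))
     (proj1 Hdiv j Hj) (fun t => proj2 Hdiv k j ltac:(lia) Hj (not_eq_sym Hjk) t)). lra.
Qed.

Lemma gt_half n k X : (3 <= n)%nat -> 1 / 2 < meas (vS n k) X -> fst X < cc n k < snd X.
Proof.
  intros H Hm. unfold meas in Hm. split.
  - destruct (Rlt_le_dec (fst X) (cc n k)) as [L|L]; auto.
    pose proof (vS_mono n k _ _ H L). rewrite vS_c in H0 by auto.
    pose proof (vS_range n k (snd X)). lra.
  - destruct (Rlt_le_dec (cc n k) (snd X)) as [L|L]; auto.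
    pose proof (vS_mono n k _ _ H L). rewrite vS_c in H0 by auto.
    pose proof (vS_range n k (fst X)). lra.
Qed.

Lemma spike_small n k X : (3 <= n)%nat -> meas (vS n k) X <= 1 / 2 -> fst X < cc n k < snd X ->
  cc n k - dd n < fst X /\ snd X < cc n k + dd n.
Proof.
  intros H Hm [H1 H2]. unfold meas in Hm. split.
  - destruct (Rlt_le_dec (cc n k - dd n) (fst X)) as [L|L]; auto.
    rewrite (vS_lo n k _ H L) in Hm. pose proof (vS_gt n k _ H H2). lra.
  - destruct (Rlt_le_dec (snd X) (cc n k + dd n)) as [L|L]; auto.
    rewrite (vS_hi n k _ H L) in Hm. pose proof (vS_lt n k _ H H1). lra.
Qed.

Lemma spike_inside n X : (3 <= n)%nat -> good_interval X -> fst X < Aa n -> w n < snd X - fst X ->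
  exists k, (k < n - 2)%nat /\ fst X < cc n k < snd X.
Proof.
  intros H [G1 [G2 G3]] HA Hl. destruct (wfacts n H) as [Hw [Hw3 HN]].
  destruct (nat_above (fst X * INR n)) as [m [M1 M2]].
  { assert (0 <= INR n) by apply pos_INR. nra. }
  assert (Hm1 : (1 <= m)%nat).
  { apply INR_le. replace (INR 1) with 1 by (simpl; ring).
    assert (0 < INR m) by (assert (0 <= INR n) by apply pos_INR; nra).
    destruct m. simpl in H0; lra. rewrite S_INR. pose proof (pos_INR m). lra. }
  assert (Hmx : fst X < INR m * w n).
  { apply Rmult_lt_reg_r with (INR n). assert (0 < INR n) by (apply lt_0_INR; lia). auto.
    replace (INR m * w n * INR n) with (INR m) by (rewrite Rmult_assoc, (Rmult_comm (w n)), HN; ring). auto. }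
  assert (Hmx2 : INR m * w n <= fst X + w n).
  { replace (INR m * w n) with (INR m * w n * 1) by ring. rewrite <- HN.
    replace (fst X + w n) with ((fst X * INR n + 1) * w n) by (rewrite Rmult_plus_distr_r, Rmult_assoc, HN; ring).
    replace (INR m * w n * (INR n * w n)) with (INR m * w n) by (rewrite HN; ring).
    apply Rmult_le_compat_r; lra. }
  assert (Hmn : (m < n - 1)%nat).
  { apply INR_w_lt with n; auto. rewrite minus_INR by lia. replace (INR 1) with 1 by (simpl; ring).
    rewrite Rmult_minus_distr_r, HN. unfold Aa in HA. lra. }
  exists (m - 1)%nat. split. lia. unfold cc. replace (S (m - 1)) with m by lia. lra.
Qed.

Lemma lenloc n X : (3 <= n)%nat -> good_interval X -> w n < snd X - fst X ->
  (forall k, (k < n - 2)%nat -> meas (vS n k) X <= 1 / 2) ->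
  Aa n <= fst X /\ fst X < Bb n /\ Bb n < snd X.
Proof.
  intros H G Hl Hs. destruct (wfacts n H) as [Hw [Hw3 HN]]. pose proof (dd_facts n H) as [Hd Hd'].
  destruct G as [G1 [G2 G3]].
  assert (HA : Aa n <= fst X).
  { destruct (Rlt_le_dec (fst X) (Aa n)) as [L|L]; auto.
    destruct (spike_inside n X H ltac:(repeat split; auto) L Hl) as [k [Hk Hin]].
    destruct (spike_small n k X H (Hs k Hk) Hin). lra. }
  unfold Aa, Bb in *. repeat split; lra.
Qed.

Lemma Faloc n X : (3 <= n)%nat -> good_interval X -> w n < meas (Fa n) X ->
  (forall k, (k < n - 2)%nat -> meas (vS n k) X <= 1 / 2) ->
  fst X < Bb n /\ Bb n < snd X.
Proof.
  intros H G Hm Hs. destruct (wfacts n H) as [Hw [Hw3 HN]]. pose proof (dd_facts n H) as [Hd Hd'].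
  pose proof (Fa_val n H) as [_ [Hmono _]].
  destruct G as [G1 [G2 G3]]. unfold meas in Hm.
  assert (HB : Bb n < snd X).
  { destruct (Rlt_le_dec (Bb n) (snd X)) as [L|L]; auto. exfalso.
    destruct (Rlt_le_dec (fst X) (Aa n)) as [L2|L2].
    - rewrite (Fa_r1 n (fst X)) in Hm by (auto; lra).
      pose proof (Fa_le n (snd X) H ltac:(lra)).
      destruct (spike_inside n X H ltac:(repeat split; auto) L2 ltac:(lra)) as [k [Hk Hin]].
      destruct (spike_small n k X H (Hs k Hk) Hin). lra.
    - pose proof (Hmono _ _ L). pose proof (Hmono _ _ L2).
      rewrite (Fa_r4 n (Bb n)) in H0 by (auto; unfold Bb; lra).
      rewrite (Fa_r1 n (Aa n)) in H1 by (auto; unfold Aa; lra).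
      unfold Aa, Bb in *; lra. }
  split; auto.
  destruct (Rlt_le_dec (fst X) (Bb n)) as [L|L]; auto. exfalso.
  rewrite (Fa_r4 n (fst X)) in Hm by (auto; lra). rewrite (Fa_r4 n (snd X)) in Hm by (auto; lra).
  unfold Bb in *; lra.
Qed.


Lemma measFb X : good_interval X -> meas Fb X = snd X - fst X.
Proof. intros [G1 [G2 G3]]. unfold meas. rewrite !Fb_id by lra. auto. Qed.

Lemma lengths n x : (3 <= n)%nat -> is_division n x -> is_complete n x -> envy_free n (vv n) x ->
  forall j, (j < n)%nat -> snd (x j) - fst (x j) = w n.
Proof.
  intros H Hdiv Hc Hef. destruct (wfacts n H) as [Hw [Hw3 HN]].
  pose proof (proj1 Hdiv) as Hg.
  assert (EFb : forall j, (j < n)%nat -> meas Fb (x j) <= meas Fb (x (n - 1)%nat)).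
  { intros j Hj. pose proof (Hef (n - 1)%nat j ltac:(lia) Hj). unfold util in H0.
    rewrite vv_b in H0 by auto. lra. }
  assert (EFa : forall j, (j < n)%nat -> meas (Fa n) (x j) <= meas (Fa n) (x (n - 2)%nat)).
  { intros j Hj. pose proof (Hef (n - 2)%nat j ltac:(lia) Hj). unfold util in H0.
    rewrite vv_a in H0. lra. }
  assert (Lb : meas Fb (x (n - 1)%nat) <= w n).
  { destruct (Rle_lt_dec (meas Fb (x (n - 1)%nat)) (w n)) as [L|L]; auto. exfalso.
    pose proof (Hg (n - 1)%nat ltac:(lia)) as Gb.
    rewrite measFb in L by auto.
    destruct (lenloc n (x (n - 1)%nat) H Gb L) as [B1 [B2 B3]].
    { intros k Hk. apply (half_bound n x k); auto; lia. }
    destruct (Rle_lt_dec (meas (Fa n) (x (n - 2)%nat)) (w n)) as [La|La].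
    - pose proof (EFa (n - 1)%nat ltac:(lia)).
      destruct Gb as [G1 [G2 G3]]. unfold meas in H0.
      rewrite (Fa_r4 n (snd (x (n - 1)%nat))) in H0 by (auto; lra).
      pose proof (Fa_le n (fst (x (n - 1)%nat)) H ltac:(lra)). unfold meas in La. lra.
    - destruct (Faloc n (x (n - 2)%nat) H (Hg (n - 2)%nat ltac:(lia)) La) as [A1 A2].
      { intros k Hk. apply (half_bound n x k); auto; lia. }
      apply (proj2 Hdiv (n - 2)%nat (n - 1)%nat ltac:(lia) ltac:(lia) ltac:(lia) (Bb n)).
      unfold in_open; lra. }
  intros j Hj. rewrite <- measFb by auto.
  assert (Hall : forall J, In J (map x (seq 0 n)) -> meas Fb J <= w n).
  { intros J HJ. destruct (in_map_seq x n J HJ) as [i [Hi E]]. subst. pose proof (EFb i Hi). lra. }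
  destruct (Rle_lt_dec (w n) (meas Fb (x j))) as [L|L].
  - pose proof (EFb j Hj). lra.
  - exfalso. pose proof (sum1 n x Fb Fb_val Hdiv Hc).
    pose proof (lsum_lt (meas Fb) (map x (seq 0 n)) (w n) Hall
                  (ex_intro _ (x j) (conj (in_map_seq' x n j Hj) L))).
    rewrite length_map, length_seq, HN in H1. lra.
Qed.

Lemma align n x : (3 <= n)%nat -> is_division n x -> is_complete n x -> envy_free n (vv n) x ->
  forall j, (j < n)%nat -> exists m, fst (x j) = INR m * w n.
Proof.
  intros H Hdiv Hc Hef j Hj. destruct (wfacts n H) as [Hw [Hw3 HN]].
  pose proof (lengths n x H Hdiv Hc Hef) as Hlen.
  pose proof (proj1 Hdiv) as Hg.
  set (p := fst (x j)).
  destruct (Hg j Hj) as [G1 [G2 G3]].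
  assert (Hgl : forall J, In J (map x (seq 0 n)) -> good_interval J).
  { intros J HJ. destruct (in_map_seq x n J HJ) as [i [Hi E]]. subst. apply Hg; auto. }
  assert (Hpd : PD (map x (seq 0 n))) by (apply (PD_map n x Hdiv n 0); lia).
  assert (Hcov : forall t, 0 <= t <= p -> exists I, In I (map x (seq 0 n)) /\ in_closure I t).
  { intros t Ht. destruct (Hc t ltac:(unfold p in *; lra)) as [i [Hi Hcl]]. exists (x i). split; auto. apply in_map_seq'; auto. }
  assert (E := L2 Fb Fb_val n (map x (seq 0 n)) ltac:(rewrite length_map, length_seq; auto) Hgl Hpd p ltac:(unfold p; lra) Hcov).
  rewrite Fb_id in E by (unfold p; lra).
  destruct (lsum_mult (T Fb p) (map x (seq 0 n)) (w n)) as [m Hm].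
  - intros J HJ. destruct (in_map_seq x n J HJ) as [i [Hi EJ]]. subst J.
    destruct (Nat.eq_dec i j) as [Eij|Eij].
    + subst. left. unfold T. fold p. rewrite Rmin_right by (unfold p; lra). rewrite Rmin_left by lra. ring.
    + assert (Hne : fst (x j) < snd (x j)) by (pose proof (Hlen j Hj); lra).
      pose proof (Hg i Hi) as Gi.
      destruct (disj_cases (x j) (x i) Gi Hne (fun t => proj2 Hdiv j i Hj Hi (not_eq_sym Eij) t)) as [C|[C|C]];
        destruct Gi as [I1 [I2 I3]]; unfold T.
      * right. rewrite !Rmin_left by (unfold p; lra). pose proof (Hlen i Hi).
        rewrite !Fb_id by lra. lra.
      * left. rewrite !Rmin_right by (unfold p; lra). ring.
      * left. rewrite C. ring.
  - exists m. rewrite <- E. auto.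
Qed.

Lemma x_analysis n x : (3 <= n)%nat -> is_division n x -> is_complete n x -> envy_free n (vv n) x ->
  (forall k, (k < n - 2)%nat -> util (vv n) x k k = 1 / 2) /\
  util (vv n) x (n - 2)%nat (n - 2)%nat = w n /\ util (vv n) x (n - 1)%nat (n - 1)%nat = w n.
Proof.
  intros H Hdiv Hc Hef. destruct (wfacts n H) as [Hw [Hw3 HN]]. pose proof (dd_facts n H) as [Hd Hd'].
  pose proof (lengths n x H Hdiv Hc Hef) as Hlen.
  pose proof (align n x H Hdiv Hc Hef) as Hal.
  pose proof (proj1 Hdiv) as Hg.
  assert (Hcell : forall j, (j < n)%nat -> exists m, fst (x j) = INR m * w n /\ snd (x j) = INR (S m) * w n).
  { intros j Hj. destruct (Hal j Hj) as [m Hm]. exists m. split; auto. rewrite S_INR.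
    pose proof (Hlen j Hj). lra. }
  split; [|split].
  - intros k Hk. unfold util. rewrite vv_S by auto.
    apply Rle_antisym.
    + destruct (Rle_lt_dec (meas (vS n k) (x k)) (1 / 2)) as [L|L]; auto. exfalso.
      destruct (gt_half n k (x k) H L) as [C1 C2].
      destruct (Hcell k ltac:(lia)) as [m [E1 E2]]. rewrite E1 in C1. rewrite E2 in C2.
      unfold cc in *. apply INR_w_lt in C1; auto. apply INR_w_lt in C2; auto. lia.
    + pose proof (cc_bounds n k H Hk).
      destruct (Hc (cc n k - dd n / 2) ltac:(unfold Aa in *; lra)) as [i [Hi [_ [Cl1 Cl2]]]].
      destruct (Hcell i Hi) as [m [E1 E2]]. rewrite E1 in Cl1. rewrite E2 in Cl2.
      assert (Hm1 : (m < S k)%nat) by (apply INR_w_lt with n; auto; unfold cc in *; lra).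
      assert (Hm2 : (k < S m)%nat).
      { apply INR_w_lt with n; auto. unfold cc in *. rewrite !S_INR in *. rewrite Rmult_plus_distr_r in Cl2. rewrite Rmult_plus_distr_r in Cl2 |- *. lra. }
      assert (m = k) by lia. subst m.
      pose proof (Hef k i ltac:(lia) Hi). unfold util in H1. rewrite vv_S in H1 by auto.
      unfold meas in H1 at 2. rewrite E1, E2 in H1.
      replace (INR (S k) * w n) with (cc n k) in H1 by auto.
      rewrite vS_c in H1 by auto. rewrite vS_lo in H1 by (auto; unfold cc; rewrite S_INR; lra).
      unfold meas in *. lra.
  - unfold util. rewrite vv_a. destruct (Hcell (n - 2)%nat ltac:(lia)) as [m [E1 E2]].
    pose proof (Hg (n - 2)%nat ltac:(lia)) as [G1 [G2 G3]].
    assert (Hmn : (S m <= n)%nat).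
    { destruct (le_lt_dec (S m) n) as [L|L]; auto. exfalso.
      assert (INR n * w n < INR (S m) * w n) by (apply Rmult_lt_compat_r; auto; apply lt_INR; auto). lra. }
    unfold meas. rewrite E1, E2. rewrite !Fa_mult by (auto; lia). rewrite S_INR. ring.
  - unfold util. rewrite vv_b by auto. rewrite measFb by (apply Hg; lia). apply Hlen. lia.
Qed.


Theorem theorem5 :
  forall n : nat, (2 < n)%nat ->
  exists v : nat -> R -> R,
    (forall i, (i < n)%nat -> is_valuation (v i)) /\
    exists y : nat -> R * R,
      is_division n y /\ ~ is_complete n y /\ envy_free n v y /\
      forall x : nat -> R * R,
        is_division n x -> is_complete n x -> envy_free n v x ->
        exists S : list nat,
          NoDup S /\ length S = (n - 2)%nat /\
          (forall i, In i S -> (i < n)%nat) /\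
          (forall i, In i S ->
             util v y i i = 2 * util v x i i /\ util v x i i > 0) /\
          (forall i, (i < n)%nat -> ~ In i S -> util v y i i >= util v x i i).
Proof.
  intros n Hn. assert (H : (3 <= n)%nat) by lia.
  destruct (wfacts n H) as [Hw [Hw3 HN]]. pose proof (dd_facts n H) as [Hd Hd'].
  exists (vv n). split; [intros; apply vv_val; auto|].
  exists (yy n). split; [apply yy_div; auto|]. split; [apply yy_notcomplete; auto|].
  split; [apply yy_ef; auto|].
  intros x Hdiv Hc Hef. destruct (x_analysis n x H Hdiv Hc Hef) as [HS [Ha Hb]].
  exists (seq 0 (n - 2)). split; [apply seq_NoDup|]. split; [apply length_seq|].
  split; [intros i Hi; apply in_seq in Hi; lia|]. split.
  - intros i Hi. apply in_seq in Hi. assert (Hi' : (i < n - 2)%nat) by lia.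
    rewrite (HS i Hi'). split; [|lra].
    unfold util, meas. rewrite vv_S, yy_S by auto. simpl.
    rewrite vS_hi, vS_lo; auto; lra.
  - intros i Hi Hni. assert (~ (i < n - 2)%nat) by (intro; apply Hni; apply in_seq; lia).
    destruct (idx_cases n i H Hi) as [E|[E|E]]; [lia| |]; subst i.
    + rewrite Ha. unfold util, meas. rewrite vv_a, yy_a. simpl.
      rewrite Fa_r4 by (auto; unfold Bb; lra). rewrite Fa_r2 by (auto; lra). unfold Aa, Bb; lra.
    + rewrite Hb. unfold util, meas. rewrite vv_b, yy_b by auto. simpl.
      rewrite !Fb_id by (unfold Bb; lra). unfold Bb; lra.
Qed.
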